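(* Let $F$ be a distribution function on $\mathbb{R}$ satisfying (A1), with median $\theta = F^{-1}(1/2)$, let $0 \le \varepsilon < 1/2$, let $n \ge 1$, and let $k$ be an integer with $0 \le k$ and $k+1 \le n-k$. For $G \in \mathcal{F}_\varepsilon(F)$ let $X_n = (x_1,\dots,x_n)$ be an i.i.d. sample from $G$ with order statistics $x_{(1)} \le \dots \le x_{(n)}$. Then: (a) $$\inf_{G \in \mathcal{F}_\varepsilon(F)} P_G\big(x_{(k+1)} \le \theta < x_{(n-k)}\big) = 1 - \alpha^*(n,k,\varepsilon).$$ (b) The infimum in (a) is attained by $G = (1-\varepsilon)F + \varepsilon H$ for any distribution $H$ that places all its mass to the left of $\theta$ (i.e. $H((-\infty,\theta]) = 1$) or all its mass to the right of $\theta$ (i.e. $H((\theta,\infty)) = 1$).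
   Context: Assumption (A1): $F$ is a continuous distribution function with a unique median $\theta(F) = F^{-1}(1/2)$. For $0 \le \varepsilon < 1/2$, the contamination neighborhood of $F$ is $\mathcal{F}_\varepsilon(F) = \{G : G = (1-\varepsilon)F + \varepsilon H,\ H \text{ an arbitrary distribution on } \mathbb{R}\}$. For integers $n \ge 1$, $k \ge 0$ and $0 \le \varepsilon < 1/2$, define $\alpha^*(n,k,\varepsilon) = 1 - P(k < Z_n < n-k)$, where $Z_n \sim \mathrm{Binomial}(n,(1-\varepsilon)/2)$. *)

(* Defs.v *)
From HB Require Import structures.
From mathcomp Require Import all_boot all_order all_algebra.
From mathcomp Require Import all_classical all_reals all_analysis.
Set Implicit Arguments. Unset Strict Implicit. Unset Printing Implicit Defensive.
Import Order.TTheory GRing.Theory Num.Theory.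
Import numFieldNormedType.Exports.
Local Open Scope classical_set_scope.
Local Open Scope ring_scope.

Section defs.
Context {R : realType}.

Definition cdf (mu : probability R R) (x : R) : R := fine (mu [set y | y <= x]).

Definition A1_median (mu : probability R R) (theta : R) : Prop :=
  continuous (cdf mu : R -> R) /\ (forall x, cdf mu x = 2^-1 <-> x = theta).

Definition is_contam (eps : R) (F H G : probability R R) : Prop :=
  forall A : set R, measurable A ->
    G A = ((1 - eps)%:E * F A + eps%:E * H A)%E.

Definition in_contam_nbhd (eps : R) (F G : probability R R) : Prop :=
  exists H : probability R R, is_contam eps F H G.

(* n-fold iterated integral w.r.t. G of f (x_1, ..., x_n);
   for f the indicator of a Borel set A of R^n, this is G^{(x) n}(A),
   the probability of A under an i.i.d. sample of size n from G. *)
Fixpoint iid_int (G : probability R R) (m : nat) (f : seq R -> \bar R) : \bar R :=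
  match m with
  | 0%N => f [::]
  | m'.+1 => (\int[G]_x iid_int G m' (fun s => f (x :: s)))%E
  end.

Definition iid_prob (G : probability R R) (n : nat) (E : seq R -> bool) : \bar R :=
  iid_int G n (fun s => (if E s then 1 else 0)%E).

Definition order_stat (s : seq R) (j : nat) : R :=
  nth 0 (sort (fun x y : R => x <= y) s) j.-1.

Definition ci_event (n k : nat) (theta : R) (s : seq R) : bool :=
  (order_stat s k.+1 <= theta) && (theta < order_stat s (n - k)%N).

Definition alpha_star (n k : nat) (eps : R) : R :=
  1 - fine (binomial_prob n ((1 - eps) / 2) [set j : nat | (k < j < n - k)%N]).

End defs.

(* Main.v *)
Require Import Defs.
From HB Require Import structures.
From mathcomp Require Import all_boot all_order all_algebra.
From mathcomp Require Import all_classical all_reals all_analysis.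
From mathcomp Require Import zify ring lra.
From mathcomp Require Import polyrcf.
Import Order.TTheory GRing.Theory Num.Theory.
Local Open Scope classical_set_scope.
Local Open Scope ring_scope.

Lemma nth_sorted_le (R : realType) (th : R) (t : seq R) i :
  sorted (fun x y : R => x <= y) t -> (i < size t)%N ->
  (nth 0 t i <= th) = (i < count (fun x : R => (x <= th)%R) t)%N.
Proof.
elim: t i => [//|x t IH] i /= st hi.
have allx : all (fun y => x <= y) t.
  by apply: (order_path_min (@le_trans _ _)).
have st' : sorted (fun x y : R => x <= y) t by apply: (path_sorted st).
have c0 : ~~ (x <= th) -> count (fun x : R => (x <= th)%R) t = 0%N.
  move=> nx; rewrite (@eq_in_count _ _ pred0) ?count_pred0 // => y yt /=.
  apply/negbTE; apply: contra nx => yth.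
  by apply: le_trans yth; move/allP: allx => /(_ y yt).
move: hi; case: i => [|i] hi /=.
  case: (boolP (x <= th)) => [xth|nx]; first by [].
  by rewrite c0.

case: (boolP (x <= th)) => xth.
  by rewrite add1n ltnS IH.
rewrite c0 //= add0n ltn0; apply/negbTE; rewrite -ltNge.
have hit : (i < size t)%N by [].
have := allP allx _ (mem_nth 0 hit) => /= xle.
by apply: lt_le_trans xle; rewrite ltNge.
Qed.

Lemma ci_eventE (R : realType) (th : R) n k (s : seq R) :
  size s = n -> (k.+1 <= n - k)%N ->
  ci_event n k th s = (k < count (fun x : R => (x <= th)%R) s < n - k)%N.
Proof.
move=> sz hk; rewrite /ci_event /order_stat /=.
have srt := sort_sorted (@le_total _ R) s.
have szs : size (sort (fun x y : R => x <= y) s) = n by rewrite size_sort.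
rewrite nth_sorted_le ?szs //; last by apply: leq_trans hk (leq_subr _ _).
rewrite ltNge nth_sorted_le ?szs //; last first.
  by rewrite prednK ?(leq_trans _ hk) ?leq_subr.
rewrite count_sort -leqNgt.
congr andb; rewrite -ltnS prednK //; by apply: leq_trans hk.
Qed.
Section G.
Context {T : comRingType}.

Definition bp (m : nat) (p : T) (j : nat) := p ^+ j * (1 - p) ^+ (m - j) *+ 'C(m, j).

Definition bsum (m : nat) (p : T) (h : nat -> T) :=
  \sum_(j < m.+1) bp m p j * h j.

Lemma bpmfS m (p : T) i :
  bp m.+1 p i.+1 = p * bp m p i + (1 - p) * bp m p i.+1.
Proof.
rewrite /bp  binS mulrnDr addrC; congr (_ + _).
  by rewrite subSS exprS -!mulrnAr mulrA.
case: (ltnP i m) => him.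
  rewrite subSS -!mulrnAr [RHS]mulrCA; congr (_ * _).
  by rewrite mulrnAr -exprS subnSK.
by rewrite bin_small ?ltnS // !mulr0n mulr0.
Qed.

Lemma bsumS m (p : T) h :
  bsum m.+1 p h = p * bsum m p (fun j => h j.+1) + (1 - p) * bsum m p h.
Proof.
rewrite /bsum big_ord_recl /=.
under eq_bigr do rewrite /bump /= bpmfS mulrDl.
rewrite big_split /= addrCA.
have -> : \sum_(i < m.+1) p * bp m p i * h (1 + i)%N =
   p * \sum_(j < m.+1) bp m p j * h j.+1.
  by rewrite mulr_sumr; apply: eq_bigr => i _; rewrite mulrA.
congr (_ + _).
rewrite mulr_sumr big_ord_recr /= [in RHS]big_ord_recl /=.
have -> : bp m p m.+1 = 0 by rewrite /bp bin_small.
rewrite mulr0 mul0r addr0; congr (_ + _); last first.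
  by apply: eq_bigr => i _; rewrite mulrA /bump add1n.
by rewrite /bp  !expr0 !subn0 !bin0 !mul1r !mulr1n exprS mulrA.
Qed.


End G.

Section S.
Context {R : realType}.

Lemma mle (th : R) : measurable [set x : R | x <= th].
Proof.
have := @measurable_realfun.measurable_fun_ler _ _ _ setT (fun x : R => x) (fun=> th) (@measurable_id _ _ _)
  (measurable_cst th) measurableT [set true] I.
by rewrite setTI; congr measurable; apply/seteqP; split => x /=.
Qed.

Lemma prob_fin (G : probability R R) [A : set R] : measurable A ->
  G A = (fine (G A))%:E.
Proof. by move=> mA; rewrite fineK // fin_num_measure. Qed.

Lemma int_two (G : probability R R) (th a b : R) : 0 <= a -> 0 <= b ->
  (\int[G]_x (if x <= th then a else b)%:E =
   (a * fine (G [set x | x <= th]) + b * (1 - fine (G [set x | x <= th])))%:E)%E.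
Proof.
move=> a0 b0; set A := [set x : R | x <= th].
have mA : measurable A := mle th.
have mC : measurable (~` A) := measurableC mA.
rewrite -(setUv A) ge0_integral_setU //; last 3 first.
- rewrite setUv; apply/measurable_realfun.measurable_EFinP.
  apply: measurable_fun_ifT => //.
  apply: (@measurable_realfun.measurable_fun_ler _ _ _ setT (fun x : R => x) (fun=> th)) => //.
- by move=> x _ /=; case: ifP.
- by rewrite disj_set2E setICr.
rewrite (_ : (\int[G]_(x in A) (if x <= th then a else b)%:E = \int[G]_(x in A) (cst a%:E) x)%E); last first.
  by apply: eq_integral => x; rewrite inE /A /= => ->.
rewrite (_ : (\int[G]_(x in ~` A) (if x <= th then a else b)%:E = \int[G]_(x in ~` A) (cst b%:E) x)%E); last first.
  by apply: eq_integral => x; rewrite inE /A /= => /negP/negbTE ->.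
rewrite !integral_cst //.
have hC : G (~` A) = (1 - G A)%E by exact: probability_setC.
rewrite [X in (_ + _ * X)%E]hC.
rewrite [X in (_ * X + _)%E](prob_fin G mA) [X in (_ - X)%E](prob_fin G mA).
by rewrite -EFinB -!EFinM -EFinD.
Qed.


Lemma bsum_ge0 m (p : R) h : 0 <= p <= 1 -> (forall j, 0 <= h j) -> 0 <= bsum m p h.
Proof.
move=> p01 h0; apply: sumr_ge0 => j _; apply: mulr_ge0 => //.
exact: (binomial_pmf_ge0 m j p01).
Qed.

Lemma pA01 (G : probability R R) (th : R) :
  0 <= fine (G [set x | x <= th]) <= 1.
Proof.
have mA := mle th.
rewrite -lee_fin -(prob_fin G mA) measure_ge0 /= -lee_fin -(prob_fin G mA).
exact: probability_le1.
Qed.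

Lemma iid_count (G : probability R R) (th : R) m (h : nat -> R) :
  (forall j, 0 <= h j) ->
  iid_int G m (fun s => (h (count (fun x : R => x <= th) s))%:E) =
  (bsum m (fine (G [set x | x <= th])) h)%:E.
Proof.
set p := fine (G [set x | x <= th]).
have p01 : 0 <= p <= 1 := pA01 G th.
elim: m h => [|m IH] h h0 /=.
  by rewrite /bsum big_ord1 /bp /= expr0 mul1r mulr1n mul1r.
transitivity (\int[G]_x (if x <= th then bsum m p (fun j => h j.+1)
                          else bsum m p h)%:E)%E.
  apply: eq_integral => x _.
  rewrite (IH (fun j => h ((x <= th)%R + j)%N)); last by move=> j; apply: h0.
  by case: (x <= th).
by rewrite int_two ?bsum_ge0 // bsumS -/p mulrC [X in _ + X]mulrC.
Qed.

Lemma iid_int_ext (G : probability R R) m (f g : seq R -> \bar R) :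
  (forall s, size s = m -> f s = g s) -> iid_int G m f = iid_int G m g.
Proof.
elim: m f g => [|m IH] f g fg /=; first exact: fg.
apply: eq_integral => x _; apply: IH => s hs; apply: fg => /=; by rewrite hs.
Qed.

Definition hI (n k : nat) (j : nat) : R := if (k < j < n - k)%N then 1 else 0.

Lemma iid_ci (G : probability R R) th n k : (k.+1 <= n - k)%N ->
  iid_prob G n (ci_event n k th) = (bsum n (fine (G [set x | x <= th])) (hI n k))%:E.
Proof.
move=> hk; rewrite /iid_prob -iid_count; last by move=> j; rewrite /hI; case: ifP.
apply: iid_int_ext => s hs; rewrite ci_eventE // /hI; by case: ifP.
Qed.

Lemma binom_I n k (q : R) : 0 <= q <= 1 ->
  fine (binomial_prob n q [set j : nat | (k < j < n - k)%N]) = bsum n q (hI n k).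
Proof.
case/andP => q0 q1.
rewrite (@binomial_probE R n q q0 q1) /=.
under eq_bigr do rewrite diracE -EFinM.
rewrite sumEFin /=; apply: eq_bigr => j _.
rewrite /hI /bp; congr (_ * _).
by case: ifP => H; [rewrite mem_set | rewrite memNset //= H].
Qed.

Lemma bsum_sym n k (q : R) : bsum n (1 - q) (hI n k) = bsum n q (hI n k).
Proof.
rewrite /bsum (reindex_inj rev_ord_inj) /=; apply: eq_bigr => j _.
have hj : (j <= n)%N by rewrite -ltnS.
rewrite /bp  subSS subKn // bin_sub //.
have -> : 1 - (1 - q) = q by rewrite opprB addrCA subrr addr0.
congr (_ * _).
  by rewrite [_ * q ^+ j]mulrC.
rewrite /hI; congr (if _ then _ else _).
apply/idP/idP => /andP[a b]; apply/andP; split; lia.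
Qed.
End S.

Lemma bsumB {T : comRingType} m (p : T) h1 h2 :
  bsum m p h1 - bsum m p h2 = bsum m p (fun j => h1 j - h2 j).
Proof. by rewrite /bsum -sumrB; apply: eq_bigr => j _; rewrite mulrBr. Qed.

Section P.
Context {R : realType}.

Lemma horner_bsum m (h : nat -> R) x :
  (bsum m 'X (fun j => (h j)%:P)).[x] = bsum m x h.
Proof.
rewrite /bsum horner_sum; apply: eq_bigr => j _.
by rewrite /bp hornerM hornerMn hornerM hornerXn horner_exp !hornerE.
Qed.

Lemma deriv_bsum m (h : nat -> R) :
  (bsum m 'X (fun j => (h j)%:P))^`() =
  bsum m.-1 'X (fun j => (h j.+1 - h j)%:P) *+ m.
Proof.
elim: m h => [|m IH] h.
  by rewrite /bsum big_ord1 /bp !expr0 mul1r bin0 mulr1n mul1r derivC mulr0n.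
rewrite bsumS derivD !derivM !derivX derivB derivC (IH (fun j => h j.+1)) IH /=.
have E : bsum m 'X (fun j => (h j.+1)%:P) - bsum m 'X (fun j => (h j)%:P) =
  bsum m 'X (fun j => (h j.+1 - h j)%:P).
  by rewrite bsumB /bsum; apply: eq_bigr => j _; rewrite polyCB.
case: m IH E => [|m] IH E.
  by rewrite !mulr0n !mulr0 !addr0 mul1r (derivX R) sub0r mulN1r mulr1n -E.
have F : 'X * bsum m 'X (fun j => (h j.+2 - h j.+1)%:P) +
  (1 - 'X) * bsum m 'X (fun j => (h j.+1 - h j)%:P) =
  bsum m.+1 'X (fun j => (h j.+1 - h j)%:P) by rewrite bsumS.
rewrite /= (derivX R) [in RHS]mulrS -[X in _ = X + _]E -[X in _ = _ + X *+ _]F.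
ring.
Qed.

Lemma bsum_delta m (x : R) a : (a <= m)%N ->
  bsum m x (fun j => (j == a)%:R) = bp m x a.
Proof.
move=> am; have ha : (a < m.+1)%N by [].
rewrite /bsum (bigD1 (Ordinal ha)) //= eqxx mulr1 big1 ?addr0 // => j /negbTE hj.
suff -> : (nat_of_ord j == a) = false by rewrite mulr0.
by apply/negbTE; apply: contraFN hj => /eqP jE; apply/eqP/val_inj.
Qed.

Lemma hI_diff n k j : (k.+1 <= n - k)%N ->
  hI n k j.+1 - hI n k j = (j == k)%:R - (j == (n - k).-1)%:R :> R.
Proof.
move=> hk; rewrite /hI.
case: (ltnP k j.+1) => h1; case: (ltnP j.+1 (n - k)) => h2;
case: (ltnP k j) => h3; case: (ltnP j (n - k)) => h4;
case: eqP => e1; case: eqP => e2 /=; rewrite ?subrr ?subr0 ?sub0r //; lia.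
Qed.

Lemma bp_diff_ge0 m k (x : R) : (k + k <= m)%N -> 0 <= x -> x <= 2^-1 ->
  0 <= bp m x k - bp m x (m - k).
Proof.
move=> hk x0 x12.
have x1 : x <= 1 - x by lra.
set d := (m - k - k)%N.
have e1 : (m - k = k + d)%N by rewrite /d; lia.
have e2 : (m - (m - k) = k)%N by lia.
have km : (k <= m)%N by lia.
rewrite /bp e2 (bin_sub km) e1 !exprD.
rewrite -mulrnBl mulrn_wge0 //.
have -> : x ^+ k * ((1 - x) ^+ k * (1 - x) ^+ d) - x ^+ k * x ^+ d * (1 - x) ^+ k
  = x ^+ k * (1 - x) ^+ k * ((1 - x) ^+ d - x ^+ d) by ring.
have x1' : 0 <= 1 - x by lra.
apply: mulr_ge0; first by rewrite mulr_ge0 ?exprn_ge0.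
rewrite subr_ge0; by apply: lerXn2r; rewrite // nnegrE.
Qed.

Lemma g_mono n k (p0 p : R) : (1 <= n)%N -> (k.+1 <= n - k)%N ->
  0 <= p0 -> p0 <= p -> p <= 2^-1 ->
  bsum n p0 (hI n k) <= bsum n p (hI n k).
Proof.
move=> n1 hk p00 p0p p12.
rewrite -!horner_bsum.
apply: (@ler_hornerW R p0 2^-1).
- move=> x; rewrite in_itv /= => /andP[px x12].
  rewrite deriv_bsum hornerMn horner_bsum mulrn_wge0 //.
  rewrite (_ : bsum _ _ _ = bsum n.-1 x (fun j => (j == k)%:R - (j == (n - k).-1)%:R)); last first.
    by apply: eq_bigr => j _; rewrite hI_diff.
  rewrite -bsumB !bsum_delta; [|lia|lia].
  have -> : ((n - k).-1 = n.-1 - k)%N by lia.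
  apply: bp_diff_ge0; [lia| |exact: ltW].
  exact: le_trans p00 (ltW px).
- by rewrite in_itv /= lexx (le_trans p0p p12).
- by rewrite in_itv /= p0p p12.
- exact: p0p.
Qed.
End P.

Section mix.
Context {R : realType} (F : probability R R) (e : R) (he0 : 0 <= e) (he1 : e <= 1) (x0 : R).

Let h1 : 0 <= 1 - e. Proof. by rewrite subr_ge0. Qed.

Definition mixm0 := measure_add (mscale (NngNum h1) F) (mscale (NngNum he0) (@dirac _ R x0 R)).
Definition mixm (A : set R) := mixm0 A.

Let mixm_0 : mixm set0 = 0%E. Proof. exact: (measure0 mixm0). Qed.
Let mixm_ge0 A : (0 <= mixm A)%E. Proof. exact: (measure_ge0 mixm0). Qed.
Let mixm_sa : semi_sigma_additive mixm.
Proof. exact: (@measure_semi_sigma_additive _ _ _ mixm0). Qed.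

HB.instance Definition _ := isMeasure.Build _ _ _ mixm mixm_0 mixm_ge0 mixm_sa.

Lemma mixmE A : mixm A = ((1 - e)%:E * F A + e%:E * \d_x0 A)%E.
Proof. by rewrite /mixm /mixm0 measure_addE. Qed.

Let mixm_setT : mixm setT = 1%E.
Proof.
rewrite mixmE probability_setT diracT !mule1 -EFinD.
by rewrite subrK.
Qed.

HB.instance Definition _ := Measure_isProbability.Build _ _ R mixm mixm_setT.

Definition mixp : probability R R := mixm.

End mix.

Theorem theorem1 (R : realType) (F : probability R R) (theta eps : R) (n k : nat)
  (hF : A1_median F theta) (heps0 : 0 <= eps) (heps1 : eps < 2^-1)
  (hn : (1 <= n)%N) (hk : (k.+1 <= n - k)%N) :
  (* (a) *)
  ereal_inf [set p | exists G : probability R R,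
                in_contam_nbhd eps F G /\ p = iid_prob G n (ci_event n k theta)]
    = (1 - alpha_star n k eps)%:E
  /\
  (* (b) *)
  (forall H G : probability R R,
     (H [set x | x <= theta] = 1%E \/ H [set x | theta < x] = 1%E) ->
     is_contam eps F H G ->
     iid_prob G n (ci_event n k theta) = (1 - alpha_star n k eps)%:E).
Proof.
set A := [set x : R | x <= theta].
have mA : measurable A := mle theta.
set p0 := (1 - eps) / 2.
have p001 : 0 <= p0 <= 1 by apply/andP; split; rewrite /p0; lra.
have hV : 1 - alpha_star n k eps = bsum n p0 (hI n k).
  by rewrite /alpha_star opprB addrC subrK binom_I.
have FA : F A = (2^-1)%:E.
  have := (proj2 hF theta).2 erefl; rewrite /cdf => <-.
  exact: prob_fin.
have pG : forall (HH G : probability R R), is_contam eps F HH G ->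
    fine (G A) = p0 + eps * fine (HH A).
  move=> HH G hG; rewrite (hG A mA) FA (prob_fin HH mA) -!EFinM -EFinD /=.
  by [].  
have lb : forall (HH G : probability R R), is_contam eps F HH G ->
    bsum n p0 (hI n k) <= bsum n (fine (G A)) (hI n k).
  move=> HH G hG; rewrite (pG HH G hG).
  have := pA01 HH theta; rewrite -/A => /andP[h0 h1].
  set p := p0 + eps * fine (HH A).
  have pp0 : p0 <= p by rewrite /p lerDl mulr_ge0.
  have pp1 : p <= 1 - p0 by rewrite /p /p0; nra.
  have [ph|ph] := lerP p 2^-1.
    by apply: g_mono => //; case/andP: p001.
  rewrite -[bsum n p _]bsum_sym.
  apply: g_mono => //; [by case/andP: p001|lra|lra].
have hC : [set x | theta < x] = ~` A.
  apply/seteqP; split => x /=; first by rewrite ltNge => /negP.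
  by move/negP; rewrite -ltNge.
have pb : forall (HH G : probability R R),
    (HH A = 1%E \/ HH [set x | theta < x] = 1%E) -> is_contam eps F HH G ->
    iid_prob G n (ci_event n k theta) = (bsum n p0 (hI n k))%:E.
  move=> HH G hH hG; rewrite iid_ci // (pG HH G hG).
  case: hH => hH.
    rewrite hH /= mulr1.
    have -> : p0 + eps = 1 - p0 by rewrite /p0; lra.
    by rewrite bsum_sym.
  have e1 := probability_setC HH mA.
  rewrite -hC hH (prob_fin HH mA) -EFinB in e1.
  case: e1 => e1.
  have -> : fine (HH A) = 0 by lra.
  by rewrite mulr0 addr0.
split; last by move=> HH G hH hG; rewrite (pb HH G hH hG); congr EFin; rewrite -hV.
rewrite [X in _ = X%:E]hV; apply/le_anti/andP; split.
- have he1 : eps <= 1 by lra.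
  apply: ereal_inf_lbound.
  exists (mixp F eps heps0 he1 (theta + 1)); split.
    exists (@dirac _ R (theta + 1) R) => B mB.
    exact: mixmE.
  apply/esym/(pb (@dirac _ R (theta + 1) R)); last by move=> B mB; exact: mixmE.
  right; transitivity (((theta + 1) \in [set x | theta < x])%:R%:E : \bar R); first exact: diracE.
  rewrite mem_set // /=; lra.
- apply: le_ereal_inf_tmp => y [G [[HH hG] ->]].
  rewrite iid_ci // lee_fin; exact: (lb HH G hG).
Qed.
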